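(* Let $K$ be a field of characteristic not equal to $3$, and let $\phi(z)\in K[z]$ be a cubic polynomial. Then there is a degree one polynomial $\eta\in K[z]$ such that $\psi=\eta^{-1}\circ\phi\circ\eta$ is in normal form. Moreover, if another degree one polynomial $\tilde{\eta}\in K[z]$ also gives a normal form $\tilde{\psi}=\tilde{\eta}^{-1}\circ\phi\circ\tilde{\eta}$, then either $\tilde{\eta}=\eta$ and $\tilde{\psi}=\psi$, or else both normal forms $\psi(z)=az^3+bz$ and $\tilde{\psi}(z)=\tilde{a}z^3+bz$ are of the form $az^3+bz$ with the same linear coefficient $b$, and the quotient $\tilde{a}/a$ of their lead coefficients is the square of an element of $K$.
   Context: A cubic polynomial $\phi\in K[z]$ is said to be in normal form if either $\phi(z)=az^3+bz+1$ or $\phi(z)=az^3+bz$ for some $a,b\in K$ (with $a\neq0$). *)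

(* Defs.v *)
From HB Require Import structures.
From mathcomp Require Import all_boot all_order all_algebra.
Set Implicit Arguments. Unset Strict Implicit. Unset Printing Implicit Defensive.
Import GRing.Theory.
Local Open Scope ring_scope.

Definition deg_one (K : fieldType) (eta : {poly K}) : Prop := size eta = 2%N.

Definition lin_inv (K : fieldType) (eta : {poly K}) : {poly K} :=
  (lead_coef eta)^-1 *: ('X - (eta`_0)%:P).

(* eta^{-1} o phi o eta; note  p \Po q  is p(q(z)). *)
Definition conj_poly (K : fieldType) (eta phi : {poly K}) : {poly K} :=
  lin_inv eta \Po (phi \Po eta).

Definition normal_form (K : fieldType) (p : {poly K}) : Prop :=
  exists a b : K, a != 0 /\
    (p = a *: 'X^3 + b *: 'X + 1 \/ p = a *: 'X^3 + b *: 'X).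

(* Main.v *)
Require Import Defs.
From HB Require Import structures.
From mathcomp Require Import all_boot all_order all_algebra.
From mathcomp Require Import ring.
Import GRing.Theory.
Local Open Scope ring_scope.

Lemma gen (R : comNzRingType) (c3 c2 c1 c0 u v X : R) :
  c3 * (u * X + v) ^+ 3 + c2 * (u * X + v) ^+ 2 +
  c1 * (u * X + v) + c0 - v =
  c3 * u ^+ 3 * X^+3 + u ^+ 2 * (3%:R * c3 * v + c2) * X^+2 +
  u * (3%:R * c3 * v ^+ 2 + 2%:R * c2 * v + c1) * X +
  (c3 * v ^+ 3 + c2 * v ^+ 2 + c1 * v + c0 - v).
Proof. ring. Qed.

Section S.
Set Implicit Arguments. Unset Strict Implicit.
Variable K : fieldType.

Definition F (A B C D : K) : {poly K} := A *: 'X^3 + B *: 'X^2 + C *: 'X + D%:P.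

Lemma F_coef A B C D :
  (F A B C D)`_0 = D /\ (F A B C D)`_1 = C /\ (F A B C D)`_2 = B /\ (F A B C D)`_3 = A.
Proof. rewrite /F !coefD !coefZ !coefXn !coefX !coefC /=.
by rewrite !(mulr0, mulr1, addr0, add0r). Qed.

Lemma F_inj A B C D A' B' C' D' : F A B C D = F A' B' C' D' ->
  [/\ A = A', B = B', C = C' & D = D'].
Proof.
move=> E; have [h0 [h1 [h2 h3]]] := F_coef A B C D.
have [g0 [g1 [g2 g3]]] := F_coef A' B' C' D'.
by split; [rewrite -h3 -g3 E|rewrite -h2 -g2 E|rewrite -h1 -g1 E|rewrite -h0 -g0 E].
Qed.

Lemma phiE (phi : {poly K}) : size phi = 4%N ->
  phi = F phi`_3 phi`_2 phi`_1 phi`_0.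
Proof.
move=> s; apply/polyP => i; rewrite /F !coefD !coefZ !coefXn !coefX !coefC.
case: i => [|[|[|[|i]]]] /=; rewrite ?(mulr0, mulr1, addr0, add0r) //.
by rewrite nth_default // s.
Qed.

Lemma etaE (eta : {poly K}) : size eta = 2%N ->
  eta = eta`_1 *: 'X + (eta`_0)%:P.
Proof.
move=> s; apply/polyP => i; rewrite !coefD !coefZ !coefX !coefC.
case: i => [|[|i]] /=; rewrite ?(mulr0, mulr1, addr0, add0r) //.
by rewrite nth_default // s.
Qed.

Lemma compXn (q : {poly K}) n : 'X^n \Po q = q ^+ n.
Proof. elim: n => [|n IH]; first by rewrite expr0 -polyC1 comp_polyC.
by rewrite !exprS comp_polyM comp_polyX IH. Qed.

Lemma conjE (phi eta : {poly K}) : size phi = 4%N -> size eta = 2%N ->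
  let c3 := phi`_3 in let c2 := phi`_2 in let c1 := phi`_1 in let c0 := phi`_0 in
  let u := eta`_1 in let v := eta`_0 in
  conj_poly eta phi = u^-1 *: F (c3 * u^+3) (u^+2 * (3%:R * c3 * v + c2))
     (u * (3%:R * c3 * v^+2 + 2%:R * c2 * v + c1)) (c3 * v^+3 + c2 * v^+2 + c1 * v + c0 - v).
Proof.
move=> sp se c3 c2 c1 c0 u v.
have le : lead_coef eta = u by rewrite lead_coefE se.
rewrite /conj_poly /lin_inv le comp_polyZ; congr (_ *: _).
rewrite comp_polyB comp_polyX comp_polyC.
rewrite {1}(phiE sp) /F !comp_polyD !comp_polyZ !comp_polyC !compXn comp_polyX.
have eE := etaE se; rewrite -/u -/v in eE; rewrite -/u -/v -/c0 -/c1 -/c2 -/c3.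
clearbody u v c0 c1 c2 c3; subst eta; rewrite ?comp_polyX -!mul_polyC.
rewrite !(rmorphM, rmorphD, rmorphB, rmorphN, rmorphXn, rmorph_nat) /=.
exact: gen.
Qed.


Lemma F_scale k A B C D : k *: F A B C D = F (k*A) (k*B) (k*C) (k*D).
Proof. by rewrite /F !scalerDr !scalerA scale_polyC. Qed.

Lemma nfF (p : {poly K}) : normal_form p ->
  exists a b e, a != 0 /\ (e = 0 \/ e = 1) /\ p = F a 0 b e.
Proof.
case=> a [b [a0 [->|->]]]; exists a, b.
  by exists 1; split=> //; split; [right|rewrite /F scale0r addr0 polyC1].
by exists 0; split=> //; split; [left|rewrite /F scale0r !addr0 -/(polyC 0) ?polyC0 ?addr0].
Qed.

Lemma u_nz (eta : {poly K}) : size eta = 2%N -> eta`_1 != 0.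
Proof.
move=> se; have : lead_coef eta != 0 by rewrite lead_coef_eq0 -size_poly_eq0 se.
by rewrite lead_coefE se.
Qed.

Lemma conjF (phi eta : {poly K}) : size phi = 4%N -> size eta = 2%N ->
  let c3 := phi`_3 in let c2 := phi`_2 in let c1 := phi`_1 in let c0 := phi`_0 in
  let u := eta`_1 in let v := eta`_0 in
  conj_poly eta phi = F (c3 * u^+2) (u * (3%:R * c3 * v + c2))
     (3%:R * c3 * v^+2 + 2%:R * c2 * v + c1) (u^-1 * (c3 * v^+3 + c2 * v^+2 + c1 * v + c0 - v)).
Proof.
move=> sp se c3 c2 c1 c0 u v.
have u0 : u != 0 by exact: u_nz.
rewrite conjE // F_scale -/c3 -/c2 -/c1 -/c0 -/u -/v.
congr F; field; exact u0.
Qed.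

Lemma v_eq (phi eta : {poly K}) : size phi = 4%N -> size eta = 2%N ->
  normal_form (conj_poly eta phi) -> 3%:R * phi`_3 * eta`_0 + phi`_2 = 0.
Proof.
move=> sp se /nfF [a [b [e [_ [_ E]]]]].
move: E; rewrite conjF // => /F_inj [_ E _ _].
by move/eqP: E; rewrite mulf_eq0 (negbTE (u_nz se)) /= => /eqP.
Qed.

Lemma lin_size (u v : K) : u != 0 ->
  size (u *: 'X + v%:P) = 2%N /\ (u *: 'X + v%:P)`_1 = u /\ (u *: 'X + v%:P)`_0 = v.
Proof.
move=> u0; split; last by rewrite !coefD !coefZ !coefX !coefC /= mulr0 mulr1 addr0 add0r.
by rewrite -mul_polyC size_MXaddC polyC_eq0 (negbTE u0) size_polyC u0.
Qed.

End S.
Unset Implicit Arguments.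

Theorem proposition4p2 (K : fieldType) (phi : {poly K}) :
  ~~ (3%N \in [pchar K]) ->
  size phi = 4%N ->
  exists eta : {poly K},
    deg_one eta /\ normal_form (conj_poly eta phi) /\
    forall eta' : {poly K}, deg_one eta' -> normal_form (conj_poly eta' phi) ->
      (eta' = eta /\ conj_poly eta' phi = conj_poly eta phi) \/
      (exists a a' b : K,
         conj_poly eta phi = a *: 'X^3 + b *: 'X /\
         conj_poly eta' phi = a' *: 'X^3 + b *: 'X /\
         exists s : K, a' / a = s ^+ 2).
Proof.
move=> h3 sp.
have n3 : (3%:R : K) != 0.
  by apply: contra h3 => h; rewrite inE /= h.
have c30 : phi`_3 != 0.
  have : lead_coef phi != 0 by rewrite lead_coef_eq0 -size_poly_eq0 sp.
  by rewrite lead_coefE sp.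
set c3 := phi`_3; set c2 := phi`_2; set c1 := phi`_1; set c0 := phi`_0.
set v0 := - c2 / (3%:R * c3).
have hv0 : 3%:R * c3 * v0 + c2 = 0 by rewrite /v0; field; rewrite n3 c30.
set d := c3 * v0^+3 + c2 * v0^+2 + c1 * v0 + c0 - v0.
set L := 3%:R * c3 * v0^+2 + 2%:R * c2 * v0 + c1.
have vE : forall eta : {poly K}, size eta = 2%N -> normal_form (conj_poly eta phi) ->
    eta`_0 = v0.
  move=> eta se nf; have := v_eq sp se nf; rewrite -/c3 -/c2 => E.
  have E2 : c2 = - (3%:R * c3 * eta`_0).
    by apply: (addrI (3%:R * c3 * eta`_0)); rewrite E subrr.
  rewrite /v0 E2; field; by rewrite n3 c30.
have cE : forall eta : {poly K}, size eta = 2%N -> normal_form (conj_poly eta phi) ->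
    conj_poly eta phi = F (c3 * (eta`_1)^+2) 0 L ((eta`_1)^-1 * d).
  move=> eta se nf; rewrite conjF // -/c3 -/c2 -/c1 -/c0 (vE eta se nf) hv0 mulr0.
  by [].
have etaE' : forall eta : {poly K}, size eta = 2%N -> eta = eta`_1 *: 'X + (eta`_0)%:P.
  by move=> eta; apply: etaE.
have [d0|dn0] := eqVneq d 0.
- have [s1 [e1 e0]] := lin_size v0 (oner_neq0 K).
  have nf1 : normal_form (conj_poly (1 *: 'X + v0%:P) phi).
    rewrite conjF // e1 e0 -/c3 -/c2 -/c1 -/c0 hv0 mulr0 -/d d0 mulr0 -/L.
    exists (c3 * 1 ^+ 2), L; split; first by rewrite expr1n mulr1.
    by right; rewrite /F scale0r !addr0 -/(polyC 0) ?polyC0 ?addr0.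
  exists (1 *: 'X + v0%:P); split; first exact: s1.
  split; first exact: nf1.
  move=> eta' se nf; right.
  exists (c3 * 1 ^+ 2), (c3 * (eta'`_1) ^+ 2), L.
  rewrite (cE _ s1 nf1) (cE _ se nf) e1 d0 !mulr0 /F !(scale0r, polyC0, addr0).
  split=> //; split=> //; exists eta'`_1; rewrite expr1n mulr1; field; exact: c30.
- have [s1 [e1 e0]] := lin_size v0 dn0.
  have nf1 : normal_form (conj_poly (d *: 'X + v0%:P) phi).
    rewrite conjF // e1 e0 -/c3 -/c2 -/c1 -/c0 hv0 mulr0 -/d mulVf // -/L.
    exists (c3 * d ^+ 2), L; split; first by rewrite mulf_neq0 // expf_neq0.
    by left; rewrite /F scale0r addr0 polyC1.
  exists (d *: 'X + v0%:P); split; first exact: s1.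
  split; first exact: nf1.
  move=> eta' se nf; left.
  have ue : eta'`_1 = d.
    have [a [b [e [_ [he E]]]]] := nfF nf.
    move: E; rewrite (cE _ se nf) => /F_inj [_ _ _ E].
    have u0 := u_nz se.
    case: he => he; move: E; rewrite he.
      by move/eqP; rewrite mulf_eq0 invr_eq0 (negbTE u0) (negbTE dn0).
    move=> E; apply: (mulfI (invr_neq0 u0)); rewrite E mulVf //.
  have ee : eta' = d *: 'X + v0%:P by rewrite (etaE' _ se) ue (vE _ se nf).
  by rewrite ee.
Qed.
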